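(* Let $(X,\mathcal T,P,\leq,\{\sigma_x:x\in X\})$ be a typed topological space with $X$ finite. For any subset $D\subseteq X$ and any type $p\in P$ there is a unique partition $D=D_1\cup D_2\cup\dots\cup D_t$ such that each $D_i$ is $p$-closure connected and the union of any two or more of the $D_i$'s is not $p$-closure connected.
   Context: A typed topological space $(X,\mathcal T,P,\leq,\{\sigma_x:x\in X\})$ consists of a topological space $(X,\mathcal T)$, a partially ordered set $(P,\leq)$ of types, and for each $x\in X$ a partial function $\sigma_x:\{O\in\mathcal T:x\in O\}\to P$ such that for all $U,V$ in its domain, $\sigma_x(U)\leq\sigma_x(V)$ iff $U\subseteq V$. $U$ is a type-$p$ neighborhood of $x$ if $U$ is in the domain of $\sigma_x$ and $\sigma_x(U)=p$. $x$ is a $p$-accumulation point of $A$ if every type-$p$ neighborhood of $x$ meets $A$. $p\vdash CL_1(A)=A\cup\{p\text{-accumulation points of }A\}$, $p\vdash CL_n(A)=p\vdash CL_1(p\vdash CL_{n-1}(A))$, $p\vdash tr(A)=\bigcup_{n\ge1}p\vdash CL_n(A)$. Two sets $E,E'$ are $p$-closure disjoint if $p\vdash tr(E)\cap p\vdash tr(E')=\emptyset$. A set $D$ is $p$-closure connected if it cannot be partitioned into two non-empty $p$-closure disjoint subsets. *)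

(* Defs.v *)
From HB Require Import structures.
From mathcomp Require Import all_boot all_order.
Set Implicit Arguments. Unset Strict Implicit. Unset Printing Implicit Defensive.
Import Order.Theory.

Section TypedTop.
Variables (X : finType) (d : Order.disp_t) (P : porderType d).

Definition is_topology (T : {set {set X}}) : Prop :=
  [/\ setT \in T,
      (forall F : {set {set X}}, F \subset T -> \bigcup_(U in F) U \in T) &
      (forall U V, U \in T -> V \in T -> U :&: V \in T)].

(* sigma x is a partial function (None = undefined) from the open
   neighbourhoods of x to P, with sigma_x U <= sigma_x V iff U ⊆ V. *)
Definition is_typed_topology (T : {set {set X}}) (sigma : X -> {set X} -> option P)
  : Prop :=
  [/\ is_topology T,
      (forall x U p, sigma x U = Some p -> U \in T /\ x \in U) &
      (forall x U V p q, sigma x U = Some p -> sigma x V = Some q ->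
         ((p <= q)%O <-> U \subset V))].

Variable sigma : X -> {set X} -> option P.

Definition type_nbhd (p : P) (x : X) (U : {set X}) : bool := sigma x U == Some p.

Definition p_acc (p : P) (A : {set X}) (x : X) : bool :=
  [forall U, type_nbhd p x U ==> (U :&: A != set0)].

Definition CL1 (p : P) (A : {set X}) : {set X} := A :|: [set x | p_acc p A x].

(* CLn p n A = p |- CL_n(A) for n >= 1 (CLn p 0 A = A). *)
Definition CLn (p : P) (n : nat) (A : {set X}) : {set X} := iter n (CL1 p) A.

Definition ptr (p : P) (A : {set X}) (x : X) : Prop :=
  exists n, (1 <= n)%N /\ x \in CLn p n A.

Definition closure_disjoint (p : P) (E E' : {set X}) : Prop :=
  ~ (exists x, ptr p E x /\ ptr p E' x).

Definition closure_connected (p : P) (D : {set X}) : Prop :=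
  ~ (exists E E' : {set X},
       [/\ E != set0, E' != set0, E :|: E' = D, E :&: E' = set0 &
           closure_disjoint p E E']).

Definition good_partition (p : P) (D : {set X}) (Q : {set {set X}}) : Prop :=
  [/\ partition Q D,
      (forall B, B \in Q -> closure_connected p B) &
      (forall S : {set {set X}}, S \subset Q -> (2 <= #|S|)%N ->
         ~ closure_connected p (\bigcup_(B in S) B))].

End TypedTop.

(* Main.v *)
Require Import Defs.
From mathcomp Require Import all_boot all_order.
From Stdlib Require Import ClassicalEpsilon.
Set Implicit Arguments. Unset Strict Implicit. Unset Printing Implicit Defensive.
Import Order.Theory.

Section GG.
Variables (X : finType) (r : rel X).
Hypothesis rsym : symmetric r.

Definition sepr (E F : {set X}) := forall x y, x \in E -> y \in F -> ~~ r x y.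
Definition conn (D : {set X}) := ~ exists E F : {set X},
  [/\ E != set0, F != set0, E :|: F = D, E :&: F = set0 & sepr E F].
Definition good (D : {set X}) (Q : {set {set X}}) :=
  [/\ partition Q D, (forall B, B \in Q -> conn B) &
      (forall S : {set {set X}}, S \subset Q -> (2 <= #|S|)%N ->
         ~ conn (\bigcup_(B in S) B))].

Lemma sepr_sym E F : sepr E F -> sepr F E.
Proof. by move=> h x y xF yE; rewrite rsym; apply: h. Qed.

Lemma conn_sub C E F : conn C -> C \subset E :|: F -> sepr E F ->
  C \subset E \/ C \subset F.
Proof.
move=> cC sCEF sEF.
have [E1|E1] := eqVneq (C :&: E) set0.
  right; apply/subsetP => x xC.
  have := subsetP sCEF x xC; rewrite inE; case/orP => // xE.
  have h : x \in C :&: E by rewrite inE xC xE.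
  by rewrite E1 inE in h.
have [F1|F1] := eqVneq (C :\: E) set0.
  left; apply/subsetP => x xC; apply/negPn/negP => xE.
  have h : x \in C :\: E by rewrite inE xC xE.
  by rewrite F1 inE in h.
exfalso; apply: cC; exists (C :&: E), (C :\: E); split => //.
- by apply/setP => x; rewrite !inE; case: (x \in E); case: (x \in C).
- by apply/setP => x; rewrite !inE; case: (x \in E); case: (x \in C).
- move=> x y; rewrite !inE => /andP[_ xE] /andP[yE yC]; apply: sEF => //.
  have := subsetP sCEF y yC; rewrite inE (negbTE yE) //.
Qed.

Lemma into_block D Q C : good D Q -> conn C -> C \subset D -> C != set0 ->
  exists2 B, B \in Q & C \subset B.
Proof.
case=> pQ cQ nQ cC sCD /set0Pn[c cC0].
have inblk : forall y, y \in D -> exists2 B, B \in Q & y \in B.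
  move=> y yD; rewrite -(cover_partition pQ) in yD.
  by case/bigcupP: yD => B BQ yB; exists B.
have [B BQ cB] := inblk c (subsetP sCD c cC0).
exists B => //; apply/subsetP => y yC.
have [B' B'Q yB'] := inblk y (subsetP sCD y yC).
have [<-//|neq] := eqVneq B' B.
exfalso.
pose S := [set A in Q | A :&: C != set0].
have SQ : S \subset Q by apply/subsetP => A; rewrite inE => /andP[].
have BS : B \in S by rewrite inE BQ; apply/set0Pn; exists c; rewrite inE cB cC0.
have B'S : B' \in S by rewrite inE B'Q; apply/set0Pn; exists y; rewrite inE yB' yC.
apply: (nQ S SQ).
  by apply/card_gt1P; exists B, B'; split => //; rewrite eq_sym.
have CS : C \subset \bigcup_(A in S) A.
  apply/subsetP => z zC; have [A AQ zA] := inblk z (subsetP sCD z zC).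
  apply/bigcupP; exists A => //; rewrite inE AQ; apply/set0Pn; exists z.
  by rewrite inE zA zC.
have key : forall E F : {set X}, F != set0 -> E :|: F = \bigcup_(A in S) A ->
   E :&: F = set0 -> sepr E F -> C \subset E -> False.
  move=> E F nF EF IEF sEF CE.
  have allE : forall A, A \in S -> A \subset E.
    move=> A; rewrite inE => /andP[AQ /set0Pn[z]]; rewrite inE => /andP[zA zC].
    have sA : A \subset E :|: F by rewrite EF; apply: bigcup_sup; rewrite inE AQ; apply/set0Pn; exists z; rewrite inE zA zC.
    case: (conn_sub (cQ A AQ) sA sEF) => // AF.
    have h : z \in E :&: F by rewrite inE (subsetP CE z zC) (subsetP AF z zA).
    by rewrite IEF inE in h.
  case/set0Pn: nF => w wF.
  have : w \in E :|: F by rewrite inE wF orbT.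
  rewrite EF => /bigcupP[A AS wA].
  have h : w \in E :&: F by rewrite inE (subsetP (allE A AS) w wA) wF.
  by rewrite IEF inE in h.
case=> E [F [nE nF EF IEF sEF]].
have sC : C \subset E :|: F by rewrite EF.
case: (conn_sub cC sC sEF) => CE.
  exact: (key E F nF EF IEF sEF CE).
apply: (key F E nE); [by rewrite setUC | by rewrite setIC | exact: sepr_sym | done].
Qed.

Lemma good_uniq D Q Q' : good D Q -> good D Q' -> Q = Q'.
Proof.
have half : forall Q Q', good D Q -> good D Q' -> Q \subset Q'.
  move=> Q1 Q2 g1 g2; apply/subsetP => B BQ.
  have [p1 c1 _] := g1; have [p2 c2 _] := g2.
  have nB := partition_neq0 p1 BQ.
  have [B' B'Q sBB'] := into_block g2 (c1 B BQ) (partitionS p1 BQ) nB.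
  have nB' : B' != set0.
    apply: contraNneq nB => e; apply/eqP; apply/setP => z; rewrite inE.
    by apply/negP => zB; have := subsetP sBB' z zB; rewrite e inE.
  have [B'' B''Q sB'B''] := into_block g1 (c2 B' B'Q) (partitionS p2 B'Q) nB'.
  have eB : B = B''.
    have [//|ne] := eqVneq B B''.
    have := trivIsetP (partition_trivIset p1) B B'' BQ B''Q ne.
    case/set0Pn: nB => z zB; move/disjointFr/(_ zB).
    by rewrite (subsetP sB'B'' z (subsetP sBB' z zB)).
  suff -> : B = B' by [].
  by apply/eqP; rewrite eqEsubset sBB' /= eB.
move=> g g'; apply/eqP; rewrite eqEsubset; apply/andP; split; exact: half.
Qed.

Definition rD (D : {set X}) : rel X := [rel x y | [&& x \in D, y \in D & r x y]].

Lemma rD_sym D : symmetric (rD D).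
Proof. by move=> x y; rewrite /rD /= rsym; case: (x \in D); case: (y \in D). Qed.

Lemma good_exists D : exists Q, good D Q.
Proof.
have csym : connect_sym (rD D) := sym_connect_sym (@rD_sym D).
have eqR : {in D & &, equivalence_rel (connect (rD D))}.
  move=> x y z _ _ _; split; first exact: connect0.
  move=> Rxy; apply/idP/idP => h.
    by apply: connect_trans h; rewrite  csym.
  exact: connect_trans Rxy h.
have pQ := equivalence_partitionP eqR.
exists (equivalence_partition (connect (rD D)) D); split => //.
- move=> B /imsetP[u uD ->] [E [F [nE nF EF IEF sEF]]].
  have uB : u \in [set y in D | (connect (rD D)) u y] by rewrite inE uD connect0.
  have clo : forall E F : {set X}, E :|: F = [set y in D | (connect (rD D)) u y] ->
      E :&: F = set0 -> sepr E F -> u \in E -> forall z, z \in F -> False.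
    move=> E1 F1 EF1 IEF1 sEF1 uE z zF.
    have zB : z \in E1 :|: F1 by rewrite inE zF orbT.
    rewrite EF1 inE in zB; case/andP: zB => zD Ruz.
    have cl : closed (rD D) [set y in E1 | (connect (rD D)) u y].
      have one : forall a b, rD D a b -> a \in E1 -> (connect (rD D)) u a -> b \in E1 /\ (connect (rD D)) u b.
        move=> a b ab aE Rua.
        have Rub : (connect (rD D)) u b by apply: connect_trans Rua (connect1 ab).
        split => //.
        move: ab => /= /and3P[aD bD rab].
        have : b \in E1 :|: F1 by rewrite EF1 inE bD Rub.
        rewrite inE; case/orP => // bF.
        by have := sEF1 a b aE bF; rewrite rab.
      move=> a b ab; rewrite !inE.
      apply/andP/andP => [[aE Rua]|[bE Rub]].
        by have [] := one a b ab aE Rua.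
      have ba : rD D b a by rewrite rD_sym.
      by have [] := one b a ba bE Rub.
    have := closed_connect cl Ruz; rewrite !inE uE connect0 /= => /esym /andP[zE _].
    have h : z \in E1 :&: F1 by rewrite inE zE zF.
    by rewrite IEF1 inE in h.
  have : u \in E :|: F by rewrite EF.
  rewrite inE; case/orP => uEF.
    by case/set0Pn: nF => z zF; apply: (clo E F) zF.
  case/set0Pn: nE => z zE; apply: (clo F E) zE => //; [by rewrite setUC | by rewrite setIC | exact: sepr_sym].
- move=> S SQ /card_gt1P[B [B' [BS B'S neq]]] cS; apply: cS.
  have BQ := subsetP SQ B BS; have B'Q := subsetP SQ B' B'S.
  exists B, (\bigcup_(A in S :\ B) A); split.
  + exact: partition_neq0 pQ BQ.
  + case/set0Pn: (partition_neq0 pQ B'Q) => z zB'; apply/set0Pn; exists z.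
    by apply/bigcupP; exists B' => //; rewrite !inE eq_sym neq.
  + apply/setP => z; rewrite inE; apply/idP/idP.
      case/orP => [zB|/bigcupP[A]]; first by apply/bigcupP; exists B.
      by rewrite !inE => /andP[_ AS] zA; apply/bigcupP; exists A.
    case/bigcupP => A AS zA; have [eAB|ne] := eqVneq A B; first by rewrite -eAB zA.
    by apply/orP; right; apply/bigcupP; exists A => //; rewrite !inE ne.
  + apply/setP => z; rewrite !inE; apply/negP => /andP[zB /bigcupP[A]].
    rewrite !inE => /andP[ne AS] zA.
    have := trivIsetP (partition_trivIset pQ) A B (subsetP SQ A AS) BQ ne.
    by move/disjointFr/(_ zA); rewrite zB.
  + move=> x y xB /bigcupP[A]; rewrite !inE => /andP[ne AS] yA.
    apply/negP => rxy.
    have AQ := subsetP SQ A AS.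
    move: (BQ) => /imsetP[u uD eB].
    have := partitionS pQ AQ; move/subsetP/(_ y yA) => yD.
    have xD : x \in D by rewrite eB inE in xB; case/andP: xB.
    have yB : y \in B.
      rewrite eB inE yD /=; rewrite eB inE in xB; case/andP: xB => _ Rux.
      by apply: connect_trans Rux (connect1 _); rewrite /rD /= xD yD rxy.
    have := trivIsetP (partition_trivIset pQ) A B AQ BQ ne.
    by move/disjointFr/(_ yA); rewrite yB.
Qed.

End GG.

Section TT.
Variables (X : finType) (d : Order.disp_t) (P : porderType d)
  (T : {set {set X}}) (sigma : X -> {set X} -> option P) (p : P).
Hypothesis H : is_typed_topology T sigma.

Lemma nbhd_uniq x U V : type_nbhd sigma p x U -> type_nbhd sigma p x V -> U = V.
Proof.
case: H => _ _ h3; rewrite /type_nbhd => /eqP hU /eqP hV.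
apply/eqP; rewrite eqEsubset; apply/andP; split.
  by apply/(h3 x U V p p hU hV).
by apply/(h3 x V U p p hV hU).
Qed.

Lemma CL1_mono (A B : {set X}) : A \subset B -> CL1 sigma p A \subset CL1 sigma p B.
Proof.
move=> AB; apply/subsetP => z; rewrite !inE => /orP[zA|].
  by rewrite (subsetP AB z zA).
move=> /forallP hz; apply/orP; right; apply/forallP => U.
apply/implyP => hU; have := implyP (hz U) hU.
case/set0Pn => w; rewrite inE => /andP[wU wA]; apply/set0Pn; exists w.
by rewrite inE wU (subsetP AB w wA).
Qed.

Lemma CLn_mono n (A B : {set X}) : A \subset B -> CLn sigma p n A \subset CLn sigma p n B.
Proof. by elim: n => //= n IH AB; apply: CL1_mono; apply: IH. Qed.

Lemma CLn_S n (A : {set X}) : CLn sigma p n A \subset CLn sigma p n.+1 A.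
Proof. by rewrite /CLn /= /CL1 subsetUl. Qed.

Lemma CLn_split n (E : {set X}) z : E != set0 -> z \in CLn sigma p n E ->
  exists2 x, x \in E & z \in CLn sigma p n [set x].
Proof.
move=> nE; elim: n z => [|n IH] z /=.
  by move=> zE; exists z => //; rewrite /CLn /= inE.
rewrite /CLn /= -/(CLn sigma p n E) {1}/CL1 inE => /orP[zE|].
  have [x xE zx] := IH z zE; exists x => //.
  exact: (subsetP (CLn_S n [set x]) z zx).
rewrite inE => /forallP hz.
case: (boolP [exists U, type_nbhd sigma p z U]).
  case/existsP => U0 hU0.
  have := implyP (hz U0) hU0; case/set0Pn => w; rewrite inE => /andP[wU wE].
  have [x xE wx] := IH w wE; exists x => //.
  rewrite /CLn /= -/(CLn sigma p n [set x]) /CL1 inE; apply/orP; right.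
  rewrite inE; apply/forallP => U; apply/implyP => hU.
  rewrite (nbhd_uniq hU hU0); apply/set0Pn; exists w; by rewrite inE wU wx.
move=> /existsPn hn; case/set0Pn: nE => x xE; exists x => //.
rewrite /CLn /= -/(CLn sigma p n [set x]) /CL1 inE; apply/orP; right.
rewrite inE; apply/forallP => U; apply/implyP => hU.
by have := hn U; rewrite hU.
Qed.

Lemma ptr_split (E : {set X}) z : E != set0 ->
  ptr sigma p E z <-> exists2 x, x \in E & ptr sigma p [set x] z.
Proof.
move=> nE; split.
  case=> n [n1 zn]; have [x xE zx] := CLn_split nE zn.
  by exists x => //; exists n.
case=> x xE [n [n1 zn]]; exists n; split => //.
apply: (subsetP (CLn_mono n _)) zn; by rewrite sub1set.
Qed.

Definition rr (x y : X) : bool :=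
  if excluded_middle_informative
       (exists z, ptr sigma p [set x] z /\ ptr sigma p [set y] z)
  then true else false.

Lemma rrP x y : reflect (exists z, ptr sigma p [set x] z /\ ptr sigma p [set y] z) (rr x y).
Proof. by rewrite /rr; case: excluded_middle_informative => h; constructor. Qed.

Lemma rr_sym : symmetric rr.
Proof.
move=> x y; apply/rrP/rrP; case=> z [h1 h2]; by exists z.
Qed.


Lemma cd_iff (E F : {set X}) : E != set0 -> F != set0 ->
  closure_disjoint sigma p E F <-> sepr rr E F.
Proof.
move=> nE nF; split.
  move=> h x y xE yF; apply/negP => /rrP[z [zx zy]]; apply: h; exists z; split.
    by apply/(ptr_split z nE); exists x.
  by apply/(ptr_split z nF); exists y.
move=> s [z [zE zF]].
case/(ptr_split z nE): zE => x xE zx; case/(ptr_split z nF): zF => y yF zy.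
by have := s x y xE yF; move/negP; apply; apply/rrP; exists z.
Qed.

Lemma cc_iff (D : {set X}) : closure_connected sigma p D <-> conn rr D.
Proof.
split => h [E [F [nE nF EF IEF s]]]; apply: h; exists E, F; split => //.
  by apply/cd_iff.
by apply/cd_iff.
Qed.

Lemma good_iff (D : {set X}) Q : good_partition sigma p D Q <-> good rr D Q.
Proof.
split; case=> h1 h2 h3; split => //.
- by move=> B BQ; apply/cc_iff; apply: h2.
- by move=> S SQ cS hc; apply: (h3 S SQ cS); apply/cc_iff.
- by move=> B BQ; apply/cc_iff; apply: h2.
- by move=> S SQ cS hc; apply: (h3 S SQ cS); apply/cc_iff.
Qed.

End TT.

Theorem lemma3p9 (X : finType) (d : Order.disp_t) (P : porderType d)
  (T : {set {set X}}) (sigma : X -> {set X} -> option P) :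
  is_typed_topology T sigma ->
  forall (D : {set X}) (p : P),
    exists Q : {set {set X}},
      good_partition sigma p D Q /\
      (forall Q' : {set {set X}}, good_partition sigma p D Q' -> Q' = Q).
Proof.
move=> H D p.
have [Q gQ] := good_exists (rr_sym sigma p) D.
exists Q; split; first by apply/(good_iff p H).
move=> Q' gQ'.
have g' : good (rr sigma p) D Q' by apply/(good_iff p H).
exact: (good_uniq (rr_sym sigma p) g' gQ).
Qed.
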